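(* Let $\mathcal{P}$ be the set of probability distributions on $(\{0,1\},2^{\{0,1\}})$, let $\dot{\mathcal{P}}\subseteq\mathcal{P}$, and let $\ddot{\mathcal{P}}=\{\ddot P_1,\dots,\ddot P_c\}\subseteq\mathcal{P}$. Let $P^+$ denote the combination of the distributions in $\ddot{\mathcal{P}}$ with truth constrained by $\dot{\mathcal{P}}$. Let $\dot{\mathcal{P}}_0=\{\dot P(\{0\}):\dot P\in\dot{\mathcal{P}}\}$ and let $\underline{\ddot P},\overline{\ddot P}\in\mathcal{P}$ satisfy $$\underline{\ddot P}(\{0\})=\min_{i\in\{1,\dots,c\}:\ddot P_i(\{0\})\in\dot{\mathcal{P}}_0}\ddot P_i(\{0\}),\qquad \overline{\ddot P}(\{0\})=\max_{i\in\{1,\dots,c\}:\ddot P_i(\{0\})\in\dot{\mathcal{P}}_0}\ddot P_i(\{0\}).$$ If $\ddot P_i(\{0\})\in\dot{\mathcal{P}}_0$ for some $i\in\{1,\dots,c\}$, then $P^+=w^+\underline{\ddot P}+(1-w^+)\overline{\ddot P}$, where $$w^+=\arg\sup_{w\in[0,1]}\Big(w\,D\big(\underline{\ddot P}\,\|\,w\underline{\ddot P}+(1-w)\overline{\ddot P}\big)+(1-w)\,D\big(\overline{\ddot P}\,\|\,w\underline{\ddot P}+(1-w)\overline{\ddot P}\big)\Big).$$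
   Context: $D(P\|Q)=\sum_{i\in\{0,1\}}P(\{i\})\log\frac{P(\{i\})}{Q(\{i\})}$ (with $0\log0=0$, $0\log(0/0)=0$); $D(P'\|P''\rightsquigarrow Q)=D(P'\|P'')-D(P'\|Q)$. Game: $U(\dot P,P_1,P_2)=\langle -D(\dot P\|P_2),D(\dot P\|P_1\rightsquigarrow P_2)\rangle$, ordered lexicographically ($u\preceq v$ iff $u_1<v_1$, or $u_1=v_1$ and $u_2\le v_2$). For $Q\in\mathcal{P}$, $\mathcal{P}_Q=\arg\sup^{\preceq}_{\langle P',P''\rangle\in\dot{\mathcal{P}}\times\ddot{\mathcal{P}}}U(P',Q,P'')$, and the combination of the distributions in $\ddot{\mathcal{P}}$ with truth constrained by $\dot{\mathcal{P}}$ is $P^+=\arg\sup^{\preceq}_{Q\in\mathcal{P}:\langle\dot P_Q,\ddot P_Q\rangle\in\mathcal{P}_Q}U(\dot P_Q,\ddot P_Q,Q)$. *)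

(* Defs.v *)
From HB Require Import structures.
From mathcomp Require Import all_boot all_order all_algebra.
From mathcomp Require Import all_classical all_reals all_analysis.
Set Implicit Arguments. Unset Strict Implicit. Unset Printing Implicit Defensive.
Import Order.TTheory GRing.Theory Num.Theory.
Local Open Scope classical_set_scope.
Local Open Scope ring_scope.

Section Defs.
Variable R : realType.

(* A probability distribution on ({0,1}, 2^{0,1}) is given by its point
   masses P i = P({i}), i : 'I_2. *)
Definition is_dist (P : 'I_2 -> R) : Prop :=
  (forall i, 0 <= P i) /\ \sum_(i < 2) P i = 1.

Definition klterm (p q : R) : \bar R :=
  if p == 0 then 0%E else if q == 0 then +oo%E else (p * ln (p / q))%:E.

Definition KL (P Q : 'I_2 -> R) : \bar R := (\sum_(i < 2) klterm (P i) (Q i))%E.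

Definition KLto (P' P'' Q : 'I_2 -> R) : \bar R := (KL P' P'' - KL P' Q)%E.

Definition Ugame (Pd P1 P2 : 'I_2 -> R) : \bar R * \bar R :=
  ((- KL Pd P2)%E, KLto Pd P1 P2).

Definition lexle (u v : \bar R * \bar R) : Prop :=
  (u.1 < v.1)%E \/ (u.1 = v.1 /\ (u.2 <= v.2)%E).

Definition lexargsup (T : Type) (A : set T) (f : T -> \bar R * \bar R) : set T :=
  [set x | A x /\ forall y, A y -> lexle (f y) (f x)].

Definition bestresp (Pdot : set ('I_2 -> R)) (c : nat) (Pdd : 'I_c -> 'I_2 -> R)
  (Q : 'I_2 -> R) : set (('I_2 -> R) * ('I_2 -> R)) :=
  lexargsup [set ab | Pdot ab.1 /\ exists i, ab.2 = Pdd i]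
            (fun ab => Ugame ab.1 Q ab.2).

(* The set of combinations P^+: Q-components of the maximizers of
   U(Pd_Q, Pdd_Q, Q) over Q in \mathcal P and <Pd_Q, Pdd_Q> in \mathcal P_Q. *)
Definition combination (Pdot : set ('I_2 -> R)) (c : nat) (Pdd : 'I_c -> 'I_2 -> R)
  : set ('I_2 -> R) :=
  [set Q | is_dist Q /\ exists a b, bestresp Pdot Pdd Q (a, b) /\
     forall Q' a' b', is_dist Q' -> bestresp Pdot Pdd Q' (a', b') ->
       lexle (Ugame a' b' Q') (Ugame a b Q)].

Definition Pdot0 (Pdot : set ('I_2 -> R)) : set R :=
  [set Pd ord0 | Pd in Pdot].

Definition mix (w : R) (P Q : 'I_2 -> R) : 'I_2 -> R :=
  fun i => w * P i + (1 - w) * Q i.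

Definition wobj (Pl Ph : 'I_2 -> R) (w : R) : \bar R :=
  (w%:E * KL Pl (mix w Pl Ph) + (1 - w)%:E * KL Ph (mix w Pl Ph))%E.

End Defs.

(* Main.v *)
Require Import Defs.
From HB Require Import structures.
From mathcomp Require Import all_boot all_order all_algebra.
From mathcomp Require Import all_classical all_reals all_analysis.
From mathcomp Require Import ring lra.
Import Order.TTheory GRing.Theory Num.Theory.
Local Open Scope classical_set_scope.
Local Open Scope ring_scope.

Set Implicit Arguments. Unset Strict Implicit.
Section Aux.
Variable R : realType.
Implicit Types x y u : R.
Implicit Types P Q : 'I_2 -> R.

Lemma ln_le_sub1 u : 0 < u -> ln u <= u - 1.
Proof.
move=> u0; have := expR_ge1Dx (ln u); rewrite lnK ?posrE //; lra.
Qed.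

Lemma ln_lt_sub1 u : 0 < u -> u != 1 -> ln u < u - 1.
Proof.
move=> u0 u1; have : ln u != 0 by rewrite ln_eq0.
move=> /expR_gt1Dx; rewrite lnK ?posrE //; lra.
Qed.

Lemma lnVdiv x y : 0 < x -> 0 < y -> ln (x / y) = - ln (y / x).
Proof.
move=> x0 y0; rewrite -lnV ?posrE ?divr_gt0 // invf_div //.
Qed.

Lemma T1 x y : 0 <= x -> 0 < y -> x - y <= x * ln (x / y).
Proof.
move=> x0 y0; have [->|xp] := eqVneq x 0; first by rewrite mul0r; lra.
have xg : 0 < x by rewrite lt_neqAle eq_sym xp.
rewrite lnVdiv //; have := @ln_le_sub1 _ (divr_gt0 y0 xg).
have e : x * (y / x) = y by rewrite mulrC -mulrA mulVf // mulr1.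
nra.
Qed.

Lemma T1eq x y : 0 <= x -> 0 < y -> x * ln (x / y) = x - y -> x = y.
Proof.
move=> x0 y0; have [->|xp] := eqVneq x 0; first by rewrite mul0r; lra.
have xg : 0 < x by rewrite lt_neqAle eq_sym xp.
have [//|ne] := eqVneq x y.
rewrite lnVdiv //; have : y / x != 1.
  by apply/eqP => h; move: ne; rewrite -(divfK xp y) h mul1r eqxx.
move=> /(@ln_lt_sub1 _ (divr_gt0 y0 xg)).
have e : x * (y / x) = y by rewrite mulrC -mulrA mulVf // mulr1.
nra.
Qed.

Lemma T2 x y : 0 <= x -> 0 < y -> x * ln (x / y) <= x - y + (x - y) ^+ 2 / y.
Proof.
move=> x0 y0; have [->|xp] := eqVneq x 0.
  rewrite mul0r sub0r sqrrN expr2 mulrK ?unitfE ?gt_eqF //; lra.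
have xg : 0 < x by rewrite lt_neqAle eq_sym xp.
have := @ln_le_sub1 _ (divr_gt0 xg y0).
have e : x - y + (x - y) ^+ 2 / y = x * (x / y - 1).
  by field; rewrite gt_eqF.
rewrite e => h; nra.
Qed.

Local Notation o1 := (@ord_max 1).

Lemma sum2 (F : 'I_2 -> R) : \sum_(i < 2) F i = F ord0 + F o1.
Proof. by rewrite big_ord_recr big_ord1 /=; congr (F _ + _); apply: val_inj. Qed.

Lemma sum2e (F : 'I_2 -> \bar R) : (\sum_(i < 2) F i = F ord0 + F o1)%E.
Proof. by rewrite big_ord_recr big_ord1 /=; congr (F _ + _)%E; apply: val_inj. Qed.

Lemma dist01 P : is_dist P -> 0 <= P ord0 <= 1 /\ P o1 = 1 - P ord0.
Proof.
case=> h; rewrite sum2 => s; have := h ord0; have := h o1.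
split; [apply/andP; split|]; lra.
Qed.

Lemma ord2E (i : 'I_2) : i = ord0 \/ i = o1.
Proof.
case: i => [[|[|k]] Hi]; [left|right|by []]; exact: val_inj.
Qed.

Lemma dist_eq P Q : is_dist P -> is_dist Q -> P ord0 = Q ord0 -> P = Q.
Proof.
move=> /dist01 [_ hp] /dist01 [_ hq] e; apply: funext => i.
by case: (ord2E i) => ->; rewrite ?hp ?hq e.
Qed.

Lemma KL2 P Q : KL P Q = (klterm (P ord0) (Q ord0) + klterm (P o1) (Q o1))%E.
Proof. by rewrite /KL sum2e. Qed.

Lemma klterm_fin x y : x = 0 \/ y != 0 -> klterm x y = (x * ln (x / y))%:E.
Proof.
rewrite /klterm; case=> [->|yn]; first by rewrite eqxx mul0r.
by case: eqP => [->|_]; rewrite ?mul0r // (negbTE yn).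
Qed.

Definition kl x y := x * ln (x / y) + (1 - x) * ln ((1 - x) / (1 - y)).

Lemma KLfin_ac P Q : is_dist P -> is_dist Q ->
  (Q ord0 = 0 -> P ord0 = 0) -> (Q ord0 = 1 -> P ord0 = 1) ->
  KL P Q = (kl (P ord0) (Q ord0))%:E.
Proof.
move=> /dist01 [_ hp] /dist01 [_ hq] h0 h1.
rewrite KL2 hp hq !klterm_fin //.
  have [e|ne] := eqVneq (Q ord0) 1; last by right; apply/eqP; move/eqP: ne; lra.
  by left; rewrite h1 // subrr.
have [e|ne] := eqVneq (Q ord0) 0; last by right.
by left; rewrite h0.
Qed.

Lemma KLfin P Q : is_dist P -> is_dist Q -> 0 < Q ord0 < 1 ->
  KL P Q = (kl (P ord0) (Q ord0))%:E.
Proof.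
move=> hP hQ /andP [a b]; apply: KLfin_ac => // e; move: a b; rewrite e; lra.
Qed.

Lemma klterm_lb x y : 0 <= x -> 0 <= y ->
  ((x - y)%:E <= klterm x y)%E /\ (klterm x y = (x - y)%:E -> x = y).
Proof.
move=> x0 y0; rewrite /klterm.
have [->|xn] := eqVneq x 0.
  by split; [rewrite lee_fin; lra| move=> [] e; lra].
have [->|yn] := eqVneq y 0; first by split; [exact: leey | by []].
have yp : 0 < y by rewrite lt_neqAle eq_sym yn.
split; first by rewrite lee_fin; exact: T1.
by move=> [] /T1eq; apply.
Qed.

Lemma sum_tight (t0 t1 : \bar R) (l0 l1 : R) :
  (l0%:E <= t0)%E -> (l1%:E <= t1)%E -> l0 + l1 = 0 -> (t0 + t1 = 0)%E ->
  t0 = l0%:E.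
Proof.
case: t0 => [a| |]; case: t1 => [b| |] //=; rewrite ?lee_fin => ha hb s [] e.
by congr (_%:E); lra.
Qed.

Lemma KL_ge0 P Q : is_dist P -> is_dist Q -> (0 <= KL P Q)%E.
Proof.
move=> hP hQ; have [[_ p1] [_ q1]] := (dist01 hP, dist01 hQ).
have [hp _] := hP; have [hq _] := hQ.
have [a _] := klterm_lb (hp ord0) (hq ord0).
have [b _] := klterm_lb (hp o1) (hq o1).
rewrite KL2; apply: le_trans (leeD a b); rewrite -EFinD lee_fin p1 q1; lra.
Qed.

Lemma KL_eq0 P Q : is_dist P -> is_dist Q -> KL P Q = 0%E -> P = Q.
Proof.
move=> hP hQ; have [[_ p1] [_ q1]] := (dist01 hP, dist01 hQ).
have [hp _] := hP; have [hq _] := hQ.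
have [a a'] := klterm_lb (hp ord0) (hq ord0).
have [b _] := klterm_lb (hp o1) (hq o1).
rewrite KL2 => e; apply: dist_eq => //; apply: a'.
apply: (sum_tight a b) => //; rewrite p1 q1; lra.
Qed.

Lemma tself (a : R) : a * ln (a / a) = 0.
Proof. by have [->|an] := eqVneq a 0; rewrite ?mul0r // divff // ln1 mulr0. Qed.

Lemma kl_self x : kl x x = 0.
Proof. by rewrite /kl !tself addr0. Qed.

Lemma KL_self P : is_dist P -> KL P P = 0%E.
Proof.
move=> hP; rewrite KLfin_ac // ?kl_self //.
Qed.

Lemma split_ln (a x q m : R) : 0 <= a -> 0 <= x -> 0 < q ->
  (0 < a -> 0 < x -> 0 < m) ->
  a * (x * ln (x / q)) = a * (x * ln (x / m)) + a * x * ln (m / q).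
Proof.
move=> a0 x0 q0 hm.
have [->|an] := eqVneq a 0; first by rewrite !mul0r addr0.
have [->|xn] := eqVneq x 0; first by rewrite !(mul0r, mulr0) addr0.
have ap : 0 < a by rewrite lt_neqAle eq_sym an.
have xp : 0 < x by rewrite lt_neqAle eq_sym xn.
have mp := hm ap xp.
rewrite !ln_div ?posrE //; ring.
Qed.

Lemma comp_term w x z q : 0 <= w <= 1 -> 0 <= x -> 0 <= z -> 0 < q ->
  w * (x * ln (x / q)) + (1 - w) * (z * ln (z / q)) =
  w * (x * ln (x / (w * x + (1 - w) * z))) +
  (1 - w) * (z * ln (z / (w * x + (1 - w) * z))) +
  (w * x + (1 - w) * z) * ln ((w * x + (1 - w) * z) / q).
Proof.
move=> /andP [w0 w1] x0 z0 q0.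
rewrite (@split_ln w x q (w * x + (1 - w) * z)) //; last first.
  by move=> ap xp; have := mulr_gt0 ap xp; nra.
rewrite (@split_ln (1 - w) z q (w * x + (1 - w) * z)) //; last 2 first.
- lra.
- by move=> ap xp; have := mulr_gt0 ap xp; nra.
ring.
Qed.

Lemma kl_comp w x z q : 0 <= w <= 1 -> 0 <= x <= 1 -> 0 <= z <= 1 -> 0 < q < 1 ->
  w * kl x q + (1 - w) * kl z q =
  w * kl x (w * x + (1 - w) * z) + (1 - w) * kl z (w * x + (1 - w) * z) +
  kl (w * x + (1 - w) * z) q.
Proof.
move=> hw /andP [x0 x1] /andP [z0 z1] /andP [q0 q1].
have h0 := comp_term hw x0 z0 q0.
have h1 : 0 <= 1 - x by lra.
have h2 : 0 <= 1 - z by lra.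
have h3 : 0 < 1 - q by lra.
have h := comp_term hw h1 h2 h3.
have e : w * (1 - x) + (1 - w) * (1 - z) = 1 - (w * x + (1 - w) * z) by ring.
rewrite e in h.
rewrite /kl; rewrite !mulrDr; lra.
Qed.

Lemma kl_ge0 x y : 0 <= x <= 1 -> 0 < y < 1 -> 0 <= kl x y.
Proof.
move=> /andP [x0 x1] /andP [y0 y1].
have := T1 x0 y0; have h1 : 0 <= 1 - x by lra.
have h2 : 0 < 1 - y by lra.
have := T1 h1 h2; rewrite /kl; lra.
Qed.

Lemma kl_eq0 x y : 0 <= x <= 1 -> 0 < y < 1 -> kl x y = 0 -> x = y.
Proof.
move=> /andP [x0 x1] /andP [y0 y1] e.
have a := T1 x0 y0; have h1 : 0 <= 1 - x by lra.
have h2 : 0 < 1 - y by lra.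
have b := T1 h1 h2; apply: (T1eq x0 y0); move: e; rewrite /kl; lra.
Qed.

Lemma kl_chi2 x y : 0 <= x <= 1 -> 0 < y < 1 ->
  kl x y <= (x - y) ^+ 2 / y + (x - y) ^+ 2 / (1 - y).
Proof.
move=> /andP [x0 x1] /andP [y0 y1].
have a := T2 x0 y0; have h1 : 0 <= 1 - x by lra.
have h2 : 0 < 1 - y by lra.
have b := T2 h1 h2.
have e : (1 - x - (1 - y)) ^+ 2 = (x - y) ^+ 2 by ring.
rewrite e in b; rewrite /kl; lra.
Qed.

Lemma kl_mix_ge0 t p r : 0 <= t <= 1 -> 0 <= p <= 1 -> 0 <= r <= 1 ->
  0 <= t * kl p (t * p + (1 - t) * r).
Proof.
move=> /andP [t0 t1] /andP [p0 p1] /andP [r0 r1].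
have [->|tn] := eqVneq t 0; first by rewrite mul0r.
have tp : 0 < t by rewrite lt_neqAle eq_sym tn.
apply: mulr_ge0 => //.
set x := t * p + (1 - t) * r.
have [x0|xn0] := eqVneq x 0.
  have : p = 0 by move: x0; rewrite /x; nra.
  by move=> p0'; rewrite x0 p0' kl_self.
have [x1|xn1] := eqVneq x 1.
  have : p = 1 by move: x1; rewrite /x; nra.
  by move=> p1'; rewrite x1 p1' kl_self.
apply: kl_ge0; first by apply/andP.
have : 0 <= x by rewrite /x; nra.
have : x <= 1 by rewrite /x; nra.
move: xn0 xn1 => /eqP ? /eqP ? ? ?; apply/andP; split.
  by rewrite lt_neqAle eq_sym; apply/andP; split => //; apply/eqP.
by rewrite lt_neqAle; apply/andP; split => //; apply/eqP.
Qed.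

Lemma mix_dist w P Q : 0 <= w <= 1 -> is_dist P -> is_dist Q -> is_dist (mix w P Q).
Proof.
move=> /andP [w0 w1] [hp sp] [hq sq]; split.
  by move=> i; rewrite /mix; have := hp i; have := hq i; nra.
move: sp sq; rewrite !sum2 /mix => sp sq.
have e : w * P ord0 + (1 - w) * Q ord0 + (w * P o1 + (1 - w) * Q o1) =
  w * (P ord0 + P o1) + (1 - w) * (Q ord0 + Q o1) by ring.
by rewrite e sp sq; ring.
Qed.

Lemma mixC w P Q : mix w P Q = mix (1 - w) Q P.
Proof. by apply: funext => i; rewrite /mix; ring. Qed.

Lemma wterm w P Q : 0 <= w <= 1 -> is_dist P -> is_dist Q ->
  (w%:E * KL P (mix w P Q))%E = (w * kl (P ord0) (w * P ord0 + (1 - w) * Q ord0))%:E.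
Proof.
move=> hw hP hQ; have [w0 w1] := andP hw.
have [->|wn] := eqVneq w 0; first by rewrite mul0e mul0r.
have wp : 0 < w by rewrite lt_neqAle eq_sym wn.
have hM := mix_dist hw hP hQ.
have [/andP [p0 p1] _] := dist01 hP; have [/andP [q0 q1] _] := dist01 hQ.
rewrite KLfin_ac //= /mix.
- move=> e; move: e; nra.
- move=> e; move: e; nra.
Qed.

Lemma wobj_real w Pl Ph : 0 <= w <= 1 -> is_dist Pl -> is_dist Ph ->
  wobj Pl Ph w = (w * kl (Pl ord0) (w * Pl ord0 + (1 - w) * Ph ord0) +
     (1 - w) * kl (Ph ord0) (w * Pl ord0 + (1 - w) * Ph ord0))%:E.
Proof.
move=> hw hl hh.
have hw' : 0 <= 1 - w <= 1 by move/andP: hw => [? ?]; apply/andP; split; lra.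
rewrite /wobj wterm // [in X in (_ + X)%E]mixC wterm // -EFinD.
congr (_%:E); congr (_ + _ * kl _ _); ring.
Qed.

Lemma KL_inf0 P Q : is_dist P -> is_dist Q -> Q ord0 = 0 -> 0 < P ord0 ->
  KL P Q = +oo%E.
Proof.
move=> [hp _] [hq _] q0 p0; rewrite KL2 {1}/klterm q0 eqxx gt_eqF //=.
apply: addye; have [a _] := klterm_lb (hp o1) (hq o1).
by apply/eqP => e; rewrite e in a.
Qed.

Lemma KL_inf1 P Q : is_dist P -> is_dist Q -> Q ord0 = 1 -> P ord0 < 1 ->
  KL P Q = +oo%E.
Proof.
move=> hP hQ q1 p1; have [_ ep] := dist01 hP; have [_ eq] := dist01 hQ.
move: (hP) (hQ) => [hp _] [hq _].
rewrite KL2 ep eq q1 subrr.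
have -> : klterm (1 - P ord0) 0 = +oo%E.
  by rewrite /klterm eqxx; have -> : (1 - P ord0 == 0) = false by apply/negP => /eqP; lra.
apply: addey; have [a _] := klterm_lb (hp ord0) (hq ord0).
by rewrite q1 in a; apply/eqP => e; rewrite e in a.
Qed.

Lemma KL_conv Pl Ph Pa Q : is_dist Pl -> is_dist Ph -> is_dist Pa -> is_dist Q ->
  Pl ord0 <= Pa ord0 -> Pa ord0 <= Ph ord0 ->
  (KL Pa Q <= KL Pl Q)%E \/ (KL Pa Q <= KL Ph Q)%E.
Proof.
move=> hl hh ha hq pa ar.
have [/andP [p0 p1] _] := dist01 hl; have [/andP [r0 r1] _] := dist01 hh.
have [/andP [a0 a1] _] := dist01 ha; have [/andP [q0 q1] _] := dist01 hq.
have [e0|n0] := eqVneq (Q ord0) 0.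
  have [ea|na] := eqVneq (Pa ord0) 0.
    left; rewrite (dist_eq ha hq) ?ea ?e0 // KL_self //; exact: KL_ge0.
  right; rewrite (KL_inf0 hh hq) ?leey //.
  by have : Pa ord0 != 0 := na; move=> /eqP ?; lra.
have [e1|n1] := eqVneq (Q ord0) 1.
  have [ea|na] := eqVneq (Pa ord0) 1.
    left; rewrite (dist_eq ha hq) ?ea ?e1 // KL_self //; exact: KL_ge0.
  left; rewrite (KL_inf1 hl hq) ?leey //.
  by have : Pa ord0 != 1 := na; move=> /eqP ?; lra.
have qi : 0 < Q ord0 < 1.
  by move/eqP: n0 => ?; move/eqP: n1 => ?; apply/andP; split; lra.
rewrite !KLfin // !lee_fin.
set p := Pl ord0 in pa p0 p1 *; set r := Ph ord0 in ar r0 r1 *.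
set a := Pa ord0 in pa ar a0 a1 *; set q := Q ord0 in qi *.
have [epr|npr] := eqVneq p r.
  by left; have -> : a = p by lra.
have rp : 0 < r - p by move/eqP: npr => ?; lra.
set t := (r - a) / (r - p).
have t0 : 0 <= t by apply: divr_ge0; lra.
have t1 : t <= 1 by rewrite ler_pdivrMr //; lra.
have ea : a = t * p + (1 - t) * r.
  by rewrite /t; field; move/eqP: npr => ?; apply/eqP; lra.
have ht : 0 <= t <= 1 by apply/andP.
have hp : 0 <= p <= 1 by apply/andP.
have hr : 0 <= r <= 1 by apply/andP.
have hc := kl_comp ht hp hr qi.
rewrite -ea in hc.
have g1 := kl_mix_ge0 ht hp hr; rewrite -ea in g1.
have ht' : 0 <= 1 - t <= 1 by apply/andP; split; lra.
have g2 := kl_mix_ge0 ht' hr hp.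
have e2 : (1 - t) * r + (1 - (1 - t)) * p = a by rewrite ea; ring.
rewrite e2 in g2.
have [h|h] := lerP (kl a q) (kl p q); first by left.
right; rewrite leNgt; apply/negP => h2.
have u1 : 0 <= t * (kl a q - kl p q) by apply: mulr_ge0; lra.
have [et|nt] := eqVneq t 1.
  by move: hc u1 g1; rewrite et; lra.
have u2 : 0 < (1 - t) * (kl a q - kl r q).
  by apply: mulr_gt0; move/eqP: nt; lra.
lra.
Qed.

Definition Gm Pl Ph Q : \bar R := Order.max (KL Pl Q) (KL Ph Q).

Section Game.
Variables (Pdot : set ('I_2 -> R)) (c : nat) (Pdd : 'I_c -> 'I_2 -> R) (Pl Ph : 'I_2 -> R).
Hypothesis hPd : Pdot `<=` @is_dist R.
Hypothesis hdd : forall i, is_dist (Pdd i).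
Hypothesis hl : exists2 il, Pdot0 Pdot (Pdd il ord0) & Pl = Pdd il.
Hypothesis hh : exists2 ih, Pdot0 Pdot (Pdd ih ord0) & Ph = Pdd ih.
Hypothesis hconv : forall i Q, Pdot0 Pdot (Pdd i ord0) -> is_dist Q ->
  (KL (Pdd i) Q <= Gm Pl Ph Q)%E.

Lemma adm_in i : Pdot0 Pdot (Pdd i ord0) -> Pdot (Pdd i).
Proof. by case=> Pd hP e; rewrite -(dist_eq (hPd hP) (hdd i) e). Qed.

Lemma in_adm a i : Pdot a -> a = Pdd i -> Pdot0 Pdot (Pdd i ord0).
Proof. by move=> ha e; exists a => //; rewrite e. Qed.

Lemma A1 Q a b : is_dist Q -> bestresp Pdot Pdd Q (a, b) ->
  Ugame a b Q = ((- Gm Pl Ph Q)%E, (- Gm Pl Ph Q)%E).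
Proof.
move=> hQ [[/= ha [i hb]] hmax].
have da := hPd ha; have db : is_dist b by rewrite hb.
case: hl => il ail eil; case: hh => ih aih eih.
have fl : Pdot Pl /\ exists j, Pl = Pdd j by split; [rewrite eil; exact: adm_in | exists il].
have := hmax (Pl, Pl) fl; rewrite /lexle /= KL_self ?oppe0; last by rewrite eil.
case=> [h|[h _]].
  by move: h; rewrite oppe_gt0 ltNge KL_ge0.
have eab : a = b by apply: KL_eq0 => //; apply: oppe_inj; rewrite -h oppe0.
move: hb; rewrite -eab => hb; rewrite -eab in hmax.
have aa : Pdot0 Pdot (Pdd i ord0) by exact: (in_adm ha hb).
have key : forall j, Pdot0 Pdot (Pdd j ord0) -> (KL (Pdd j) Q <= KL a Q)%E.
  move=> j aj; have fj : Pdot (Pdd j) /\ exists k, Pdd j = Pdd k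
    by split; [exact: adm_in | exists j].
  have := hmax (Pdd j, Pdd j) fj; rewrite /lexle /= !KL_self // !oppe0 /KLto.
  by rewrite !KL_self // !sube0; case=> [hh1|[_ //]]; rewrite ltxx in hh1.
have eG : KL a Q = Gm Pl Ph Q.
  apply/eqP; rewrite eq_le; apply/andP; split; first by rewrite hb; exact: hconv.
  by rewrite /Gm ge_max eil eih !key.
by rewrite /Ugame /KLto KL_self // sub0e eG.
Qed.

Lemma A2 Q : is_dist Q -> exists j, bestresp Pdot Pdd Q (Pdd j, Pdd j).
Proof.
move=> hQ.
have [j [aj ej]] : exists j, Pdot0 Pdot (Pdd j ord0) /\ KL (Pdd j) Q = Gm Pl Ph Q.
  case: hl => il ail eil; case: hh => ih aih eih.
  rewrite /Gm maxEle; case: ifP => _; [exists ih; rewrite eih | exists il; rewrite eil]; by [].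
exists j; split; first by split; [exact: adm_in | exists j].
case=> a' b' [/= ha' [k hb']].
have da := hPd ha'; have db : is_dist b' by rewrite hb'.
rewrite /lexle /= KL_self // oppe0 /KLto KL_self // sube0.
have := KL_ge0 da db; rewrite le_eqVlt => /orP [/eqP e|lt].
  right; split; first by rewrite -e oppe0.
  have eab : a' = b' by apply: KL_eq0 => //; rewrite -e.
  rewrite -e sube0; move: hb'; rewrite -eab => hb'.
  rewrite ej hb'; apply: hconv => //.
  exact: (in_adm ha' hb').
by left; rewrite oppe_lt0.
Qed.

Lemma comb_char Q : combination Pdot Pdd Q <->
  is_dist Q /\ forall Q', is_dist Q' -> (Gm Pl Ph Q <= Gm Pl Ph Q')%E.
Proof.
split.
  case=> hQ [a [b [br hmax]]]; split => // Q' hQ'.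
  have [j bj] := A2 hQ'; have := hmax Q' _ _ hQ' bj.
  rewrite (A1 hQ' bj) (A1 hQ br) /lexle /=; case=> [h|[h _]].
    by apply: ltW; rewrite -lteN2.
  by have := congr1 oppe h; rewrite !oppeK => ->.
case=> hQ hmin; split => //.
have [j bj] := A2 hQ; exists (Pdd j), (Pdd j); split => // Q' a' b' hQ' br.
rewrite (A1 hQ' br) (A1 hQ bj) /lexle /=.
have := hmin Q' hQ'; rewrite le_eqVlt => /orP [/eqP e|lt].
  by right; rewrite e.
by left; rewrite lteN2.
Qed.

End Game.

Lemma kkt_aux (d K e0 : R) : 0 < d -> 0 <= K -> 0 < e0 ->
  (forall e, 0 < e -> e <= e0 -> e * d <= e ^+ 2 * K) -> False.
Proof.
move=> d0 K0 e00 h.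
set e := Num.min e0 (d / (K + 1)).
have K1 : 0 < K + 1 by lra.
have ep : 0 < e by rewrite lt_min e00 divr_gt0.
have h1 : e <= e0 by rewrite ge_min lexx.
have h2 : e <= d / (K + 1) by rewrite ge_min lexx orbT.
have h3 : e * (K + 1) <= d by rewrite -ler_pdivlMr.
have := h e ep h1.
have h4 := ler_wpM2l (ltW ep) h3.
rewrite expr2; nra.
Qed.

Lemma max_comb (w a b : R) : 0 <= w <= 1 -> w * a + (1 - w) * b <= a \/ w * a + (1 - w) * b <= b.
Proof.
move=> /andP [w0 w1]; have [h|h] := lerP a b.
  by right; nra.
by left; nra.
Qed.

Lemma Gm_same P Q : Gm P P Q = KL P Q.
Proof. by rewrite /Gm maxEle lexx. Qed.

Lemma minimax Pl Ph w : is_dist Pl -> is_dist Ph -> Pl ord0 <= Ph ord0 -> 0 <= w <= 1 ->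
  (forall w', 0 <= w' <= 1 -> (wobj Pl Ph w' <= wobj Pl Ph w)%E) ->
  (forall Q, is_dist Q -> (Gm Pl Ph (mix w Pl Ph) <= Gm Pl Ph Q)%E) /\
  (forall Q, is_dist Q -> (Gm Pl Ph Q <= Gm Pl Ph (mix w Pl Ph))%E -> Q = mix w Pl Ph).
Proof.
move=> hl hh pr hw hmax.
have hM := mix_dist hw hl hh.
have [/andP [p0 p1] _] := dist01 hl; have [/andP [r0 r1] _] := dist01 hh.
have [/andP [w0 w1]] := (hw, hw).
have [epr|npr] := eqVneq (Pl ord0) (Ph ord0).
  have ePh : Ph = Pl by apply: dist_eq.
  have eM : mix w Pl Ph = Pl by rewrite ePh; apply: funext => i; rewrite /mix; ring.
  rewrite eM ePh; split => Q hQ; rewrite !Gm_same KL_self //; first exact: KL_ge0.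
  by move=> h; apply/esym/KL_eq0 => //; apply/eqP; rewrite eq_le h KL_ge0.
set p := Pl ord0 in pr p0 p1 npr *; set r := Ph ord0 in pr r0 r1 npr *.
have ltpr : p < r by rewrite lt_neqAle npr.
pose W w' := w' * kl p (w' * p + (1 - w') * r) + (1 - w') * kl r (w' * p + (1 - w') * r).
have hW : forall w', 0 <= w' <= 1 -> W w' <= W w.
  by move=> w' hw'; have := hmax w' hw'; rewrite !wobj_real.
set m := w * p + (1 - w) * r.
have eM0 : mix w Pl Ph ord0 = m by [].
have Whalf : 0 < W (1 / 2).
  rewrite /W; set mh := _ * p + _ * r.
  have mhi : 0 < mh < 1 by apply/andP; split; rewrite /mh; lra.
  have g1 : 0 <= kl p mh by apply: kl_ge0 => //; apply/andP.
  have g2 : 0 <= kl r mh by apply: kl_ge0 => //; apply/andP.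
  have g3 : kl r mh != 0.
    apply/eqP => /kl_eq0 e; have : r = mh by apply: e => //; apply/andP.
    rewrite /mh; lra.
  have g4 : 0 < kl r mh by rewrite lt_neqAle eq_sym g3.
  lra.
have Wle := hW (1 / 2) (ltac:(apply/andP; split; lra)).
have mi : 0 < m < 1.
  apply/andP; split.
    rewrite lt_neqAle; apply/andP; split; last by rewrite /m; nra.
    apply/eqP => m0.
    have w1' : w = 1 by move: m0; rewrite /m; nra.
    have p0' : p = 0 by move: m0; rewrite /m w1'; lra.
    have : W w = 0.
      by rewrite /W w1' p0' (_ : 1 * 0 + (1 - 1) * r = 0); [rewrite kl_self; ring | ring].
    lra.
  rewrite lt_neqAle; apply/andP; split; last by rewrite /m; nra.
  apply/eqP => m1.
  have w0' : w = 0 by move: m1; rewrite /m; nra.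
  have r1' : r = 1 by move: m1; rewrite /m w0'; lra.
  have : W w = 0.
    by rewrite /W w0' r1' (_ : 0 * p + (1 - 0) * 1 = 1); [rewrite kl_self; ring | ring].
  lra.
have [m0 m1] := andP mi.
set A := kl p m; set B := kl r m.
set V := w * A + (1 - w) * B.
have WV : W w = V by [].
set K1 := (p - r) ^+ 2 / m + (p - r) ^+ 2 / (1 - m).
have K10 : 0 <= K1 by rewrite /K1; apply: addr_ge0; apply: divr_ge0; rewrite ?sqr_ge0 //; lra.
have kkt : forall w', 0 <= w' <= 1 -> (w' - w) * (A - B) <= (w' - w) ^+ 2 * K1.
  move=> w' hw'; have [w0' w1'] := andP hw'.
  have hp : 0 <= p <= 1 by apply/andP.
  have hr : 0 <= r <= 1 by apply/andP.
  have hc := kl_comp hw' hp hr mi.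
  set mw := w' * p + (1 - w') * r in hc.
  have mwi : 0 <= mw <= 1 by apply/andP; split; rewrite /mw; nra.
  have ch := kl_chi2 mwi mi.
  have e : (mw - m) ^+ 2 / m + (mw - m) ^+ 2 / (1 - m) = (w' - w) ^+ 2 * K1.
    have dm : mw - m = (w' - w) * (p - r) by rewrite /mw /m; ring.
    rewrite dm /K1; field.
    by apply/andP; split; apply/eqP; lra.
  rewrite e in ch.
  have := hW w' hw'; rewrite WV /W -/mw.
  rewrite /V /A /B; lra.
have AV : A <= V.
  have [e1|n1] := eqVneq w 1; first by rewrite /V e1 subrr mul0r mul1r addr0.
  have w1s : w < 1 by rewrite lt_neqAle n1.
  rewrite leNgt; apply/negP => AgtV.
  have dAB : 0 < A - B by move: AgtV; rewrite /V; nra.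
  apply: (kkt_aux dAB K10 (_ : 0 < 1 - w)); first lra.
  move=> e ep ee; have := kkt (w + e) (ltac:(apply/andP; split; lra)).
  by rewrite addrAC subrr add0r.
have BV : B <= V.
  have [e0|n0] := eqVneq w 0; first by rewrite /V e0 subr0 mul0r mul1r add0r.
  have w0s : 0 < w by rewrite lt_neqAle eq_sym n0.
  rewrite leNgt; apply/negP => BgtV.
  have dBA : 0 < B - A by move: BgtV; rewrite /V; nra.
  apply: (kkt_aux dBA K10 w0s).
  move=> e ep ee; have := kkt (w - e) (ltac:(apply/andP; split; lra)).
  have -> : w - e - w = - e by ring.
  rewrite sqrrN; lra.
have hMi : 0 < mix w Pl Ph ord0 < 1 by rewrite eM0.
have GM : (Gm Pl Ph (mix w Pl Ph) <= V%:E)%E.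
  by rewrite /Gm ge_max !KLfin // eM0 !lee_fin -/p -/r -/A -/B AV BV.
have VGM : forall Q, is_dist Q -> (V%:E <= Gm Pl Ph Q)%E /\
    ((Gm Pl Ph Q <= V%:E)%E -> Q = mix w Pl Ph).
  move=> Q hQ; have [/andP [q0 q1] _] := dist01 hQ.
  have [e0|n0] := eqVneq (Q ord0) 0.
    have -> : Gm Pl Ph Q = +oo%E.
      rewrite /Gm (KL_inf0 hh hQ) //; last by rewrite -/r; lra.
      by rewrite maxEle leey.
    by split; [exact: leey | rewrite leNgt ltey].
  have [e1|n1] := eqVneq (Q ord0) 1.
    have -> : Gm Pl Ph Q = +oo%E.
      rewrite /Gm (KL_inf1 hl hQ) //; last by rewrite -/p; lra.
      by rewrite maxEle; case: ifP => //; rewrite leye_eq => /eqP.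
    by split; [exact: leey | rewrite leNgt ltey].
  have qi : 0 < Q ord0 < 1.
    by move/eqP: n0 => ?; move/eqP: n1 => ?; apply/andP; split; lra.
  have hp : 0 <= p <= 1 by apply/andP.
  have hr : 0 <= r <= 1 by apply/andP.
  have hc := kl_comp hw hp hr qi; rewrite -/m -/A -/B in hc.
  have mi' : 0 <= m <= 1 by apply/andP; split; lra.
  have g := kl_ge0 mi' qi.
  have LB : (V%:E + (kl m (Q ord0))%:E <= Gm Pl Ph Q)%E.
    rewrite /Gm !KLfin // le_max !lee_fin -/p -/r.
    by case: (max_comb (kl p (Q ord0)) (kl r (Q ord0)) hw) => h;
       [apply/orP; left | apply/orP; right]; rewrite -hc.
  split.
    by apply: le_trans LB; rewrite -EFinD lee_fin; lra.
  move=> h; have := le_trans LB h; rewrite -EFinD lee_fin => h2.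
  have e : kl m (Q ord0) = 0 by lra.
  have := kl_eq0 mi' qi e => emq.
  by apply: dist_eq => //; rewrite eM0 emq.
split.
  by move=> Q hQ; apply: le_trans GM _; case: (VGM Q hQ).
by move=> Q hQ h; case: (VGM Q hQ) => _; apply; apply: le_trans h GM.
Qed.

End Aux.

Theorem corollary6 (R : realType) (Pdot : set ('I_2 -> R)) (c : nat)
    (Pdd : 'I_c -> 'I_2 -> R) (Pl Ph : 'I_2 -> R) (wplus : R) :
  Pdot `<=` @is_dist R ->
  (forall i, is_dist (Pdd i)) ->
  is_dist Pl -> is_dist Ph ->
  (* Pl({0}) = min over admissible i of Pdd_i({0}) *)
  (exists2 i, Pdot0 Pdot (Pdd i ord0) & Pl ord0 = Pdd i ord0) ->
  (forall i, Pdot0 Pdot (Pdd i ord0) -> Pl ord0 <= Pdd i ord0) ->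
  (* Ph({0}) = max over admissible i of Pdd_i({0}) *)
  (exists2 i, Pdot0 Pdot (Pdd i ord0) & Ph ord0 = Pdd i ord0) ->
  (forall i, Pdot0 Pdot (Pdd i ord0) -> Pdd i ord0 <= Ph ord0) ->
  (* hypothesis: some Pdd_i({0}) lies in Pdot_0 *)
  (exists i, Pdot0 Pdot (Pdd i ord0)) ->
  (* wplus is an argsup of the objective over [0,1] *)
  0 <= wplus <= 1 ->
  (forall w, 0 <= w <= 1 -> (wobj Pl Ph w <= wobj Pl Ph wplus)%E) ->
  combination Pdot Pdd = [set mix wplus Pl Ph].
Proof.
move=> hPd hdd hl hh [il ail eil] hlmin [ih aih eih] hhmax _ hw hmax.
have ePl : Pl = Pdd il := dist_eq hl (hdd il) eil.
have ePh : Ph = Pdd ih := dist_eq hh (hdd ih) eih.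
have hl' : exists2 il, Pdot0 Pdot (Pdd il ord0) & Pl = Pdd il by exists il.
have hh' : exists2 ih, Pdot0 Pdot (Pdd ih ord0) & Ph = Pdd ih by exists ih.
have hconv : forall i Q, Pdot0 Pdot (Pdd i ord0) -> is_dist Q ->
    (KL (Pdd i) Q <= Gm Pl Ph Q)%E.
  move=> i Q ai hQ; rewrite /Gm le_max.
  by case: (KL_conv hl hh (hdd i) hQ (hlmin i ai) (hhmax i ai)) => ->; rewrite ?orbT.
have pr : Pl ord0 <= Ph ord0 by rewrite eih; exact: hlmin.
have [B1 B2] := minimax hl hh pr hw hmax.
have hM := mix_dist hw hl hh.
have cc := comb_char hPd hdd hl' hh' hconv.
apply/seteqP; split => Q /=.
  by move=> /cc [hQ hmin]; apply: B2 => //; apply: hmin.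
by move=> ->; apply/cc; split => // Q' hQ'; apply: B1.
Qed.
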